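(* Let $\mathbf{Y}\in\mathbb{R}^{N\times B}$, $\mathbf{R}\in\mathbb{R}^{M\times B}$, and $\mathbf{A}\in\mathbb{R}^{N\times M}$ with $\mathbf{A}^{T}\mathbf{A}$ nonsingular; let $\mathbf{A}=\mathbf{U}\boldsymbol{\Lambda}\mathbf{V}^{T}$ be a compact singular value decomposition ($\mathbf{U}\in\mathbb{R}^{N\times M}$ with orthonormal columns, $\boldsymbol{\Lambda},\mathbf{V}\in\mathbb{R}^{M\times M}$). Let $\mathbf{S}_{1},\dots,\mathbf{S}_{M}$ be $B\times B$ symmetric positive definite matrices, $\mathbf{Q}=\mathrm{blockdiag}(\mathbf{S}_{1},\dots,\mathbf{S}_{M})+\mathbf{A}^{T}\mathbf{A}\otimes\mathbf{I}_{B}$ and $\mathbf{z}=\mathrm{vec}\big((\mathbf{Y}-\mathbf{A}\mathbf{R})^{T}\mathbf{A}\big)$, and assume $\mathbf{z}\neq\mathbf{0}$. Then $$0<\mathbf{z}^{T}\mathbf{Q}^{-1}\mathbf{z}<\Vert\mathbf{U}^{T}(\mathbf{Y}-\mathbf{A}\mathbf{R})\Vert_{F}^{2}.$$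
   Context: $\mathrm{vec}(\mathbf{X})$ stacks the columns of $\mathbf{X}$; $\otimes$ is the Kronecker product; $\mathrm{blockdiag}(\cdot)$ is the block diagonal matrix with the listed diagonal blocks; $\Vert\cdot\Vert_F$ is the Frobenius norm. *)

(* Defs.v *)
From HB Require Import structures.
From mathcomp Require Import all_boot all_order all_algebra.
Set Implicit Arguments. Unset Strict Implicit. Unset Printing Implicit Defensive.
Import Order.TTheory GRing.Theory Num.Theory.
Local Open Scope ring_scope.

(* Index convention: 'I_(m * n) is identified with 'I_m * 'I_n through
   mathcomp's [mxvec_index i j] (row-major, i.e. value i * n + j). *)

(* vec X stacks the columns of X : 'M_(m, n) into a column vector of size n*m;
   entry (mxvec_index j i) is X i j, i.e. column j occupies the j-th block. *)
Definition vec (R : nmodType) (m n : nat) (X : 'M[R]_(m, n)) : 'cV[R]_(n * m) :=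
  (mxvec X^T)^T.

Definition kron (R : pzRingType) (m1 n1 m2 n2 : nat)
  (A : 'M[R]_(m1, n1)) (B : 'M[R]_(m2, n2)) : 'M[R]_(m1 * m2, n1 * n2) :=
  \sum_(i1 < m1) \sum_(j1 < n1) \sum_(i2 < m2) \sum_(j2 < n2)
     (A i1 j1 * B i2 j2) *: delta_mx (mxvec_index i1 i2) (mxvec_index j1 j2).

Definition blockdiag (R : pzRingType) (M B : nat) (S : 'I_M -> 'M[R]_B)
  : 'M[R]_(M * B) :=
  \sum_(i < M) kron (delta_mx i i) (S i).

Definition sym_pos_def (R : numDomainType) (n : nat) (S : 'M[R]_n) : Prop :=
  S^T = S /\ forall x : 'cV[R]_n, x != 0 -> 0 < (x^T *m S *m x) 0 0.

Definition frob2 (R : pzRingType) (m n : nat) (X : 'M[R]_(m, n)) : R :=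
  \sum_(i < m) \sum_(j < n) X i j ^+ 2.

(* Main.v *)
Require Import Defs.
From HB Require Import structures.
From mathcomp Require Import all_boot all_order all_algebra.
From mathcomp Require Import ring lra.
Import Order.TTheory GRing.Theory Num.Theory.
Local Open Scope ring_scope.

Module Helpers.
Set Implicit Arguments. Unset Strict Implicit.


Section H.
Variable R : comNzRingType.

Lemma sum_mxvec (m n : nat) (F : 'I_(m * n) -> R) :
  \sum_(k < m * n) F k = \sum_(i < m) \sum_(j < n) F (mxvec_index i j).
Proof.
rewrite pair_big /= (reindex (uncurry (@mxvec_index m n))) /=.
  by apply: eq_bigr => -[i j].
have [g h1 h2] := @curry_mxvec_bij m n.
by exists g => x _; [apply: h1|apply: h2].
Qed.

Definition cv (m n : nat) (X : 'M[R]_(m, n)) : 'cV[R]_(m * n) := (mxvec X)^T.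

Lemma cvE m n (X : 'M[R]_(m, n)) i j (c : 'I_1) : cv X (mxvec_index i j) c = X i j.
Proof. by rewrite /cv mxE [c]ord1 mxvecE. Qed.

Lemma kronE m1 n1 m2 n2 (K : 'M[R]_(m1, n1)) (L : 'M[R]_(m2, n2)) i1 i2 j1 j2 :
  kron K L (mxvec_index i1 i2) (mxvec_index j1 j2) = K i1 j1 * L i2 j2.
Proof.
have inj : forall m n, injective (uncurry (@mxvec_index m n)).
  move=> m n; have [g h1 h2] := @curry_mxvec_bij m n.
  by apply: (can_inj (g:=g)) => x; apply: h1.
have ieq : forall m n (a a' : 'I_m) (b b' : 'I_n),
   (mxvec_index a b == mxvec_index a' b') = (a == a') && (b == b').
  move=> m n a a' b b'; apply/eqP/andP => [/(inj m n (a, b) (a', b')) [-> ->]|[/eqP-> /eqP->]] //.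
rewrite /kron summxE (bigD1 i1) //= [X in _ + X]big1 => [|a na]; last first.
  move: na; rewrite eq_sym => /negPf na.
  rewrite summxE big1 // => b _; rewrite summxE big1 // => c _.
  rewrite summxE big1 // => d _; by rewrite !mxE !ieq na mulr0.
rewrite addr0 summxE (bigD1 j1) //= [X in _ + X]big1 => [|a na]; last first.
  move: na; rewrite eq_sym => /negPf na.
  rewrite summxE big1 // => c _.
  rewrite summxE big1 // => d _; by rewrite !mxE !ieq na andbF mulr0.
rewrite addr0 summxE (bigD1 i2) //= [X in _ + X]big1 => [|a na]; last first.
  move: na; rewrite eq_sym => /negPf na.
  rewrite summxE big1 // => d _; by rewrite !mxE !ieq na /= andbF mulr0.
rewrite addr0 summxE (bigD1 j2) //= [X in _ + X]big1 => [|a na]; last first.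
  move: na; rewrite eq_sym => /negPf na.
  by rewrite !mxE !ieq na /= !andbF mulr0.
by rewrite addr0 !mxE !eqxx mulr1.
Qed.

Lemma kron_cv m1 n1 m2 n2 (K : 'M[R]_(m1, n1)) (L : 'M[R]_(m2, n2)) (Y : 'M[R]_(n1, n2)) :
  kron K L *m cv Y = cv (K *m Y *m L^T).
Proof.
apply/matrixP => k c; rewrite [c]ord1; case/mxvec_indexP: k => i j.
rewrite cvE !mxE sum_mxvec.
under eq_bigr do under eq_bigr do rewrite kronE cvE.
rewrite exchange_big /=; apply: eq_bigr => b _; rewrite !mxE mulr_suml.
by apply: eq_bigr => a _; ring.
Qed.

Lemma kron_tr m1 n1 m2 n2 (K : 'M[R]_(m1, n1)) (L : 'M[R]_(m2, n2)) :
  (kron K L)^T = kron K^T L^T.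
Proof.
apply/matrixP => k l; case/mxvec_indexP: k => i j; case/mxvec_indexP: l => a b.
by rewrite mxE !kronE !mxE.
Qed.

Lemma dot_cv m n (X Y : 'M[R]_(m, n)) : ((cv X)^T *m cv Y) 0 0 = \tr (X *m Y^T).
Proof.
rewrite !mxE sum_mxvec /mxtrace; apply: eq_bigr => i _; rewrite mxE.
by apply: eq_bigr => j _; rewrite [(cv X)^T _ _]mxE !cvE mxE.
Qed.

Lemma cv_vec m n (x : 'cV[R]_(m * n)) : cv (vec_mx x^T) = x.
Proof. by rewrite /cv vec_mxK trmxK. Qed.

Lemma tr_delta m (X : 'M[R]_m) j : \tr (X *m delta_mx j j) = X j j.
Proof.
rewrite /mxtrace (bigD1 j) //= big1 => [|i nij]; last first.
  rewrite mxE big1 // => k _; by rewrite !mxE (negPf nij) andbF mulr0.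
rewrite addr0 mxE (bigD1 j) //= big1 => [|k nkj]; last first.
  by rewrite !mxE (negPf nkj) /= mulr0.
by rewrite !mxE eqxx /= mulr1 addr0.
Qed.


Lemma addE m n (M N : 'M[R]_(m, n)) i j : (M + N) i j = M i j + N i j.
Proof. by rewrite !mxE. Qed.
Lemma subE m n (M N : 'M[R]_(m, n)) i j : (M - N) i j = M i j - N i j.
Proof. by rewrite !mxE. Qed.

Lemma tr_sq m n (C : 'M[R]_(m, n)) : \tr (C *m C^T) = \sum_i \sum_j C i j ^+ 2.
Proof.
rewrite /mxtrace; apply: eq_bigr => i _; rewrite mxE.
by apply: eq_bigr => j _; rewrite mxE expr2.
Qed.

Lemma blockdiag_cv M B (S : 'I_M -> 'M[R]_B) (X : 'M[R]_(M, B)) :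
  blockdiag S *m cv X = cv (\sum_j delta_mx j j *m X *m (S j)^T).
Proof.
rewrite /blockdiag mulmx_suml; under eq_bigr do rewrite kron_cv.
by rewrite /cv linear_sum /= linear_sum.
Qed.

Lemma qfD M B (S : 'I_M -> 'M[R]_B) (X : 'M[R]_(M, B)) :
  ((cv X)^T *m blockdiag S *m cv X) 0 0
  = \sum_j ((row j X) *m S j *m (row j X)^T) 0 0.
Proof.
rewrite -mulmxA blockdiag_cv dot_cv linear_sum /= mulmx_sumr.
rewrite linear_sum; apply: eq_bigr => j _.
rewrite !trmx_mul !trmxK trmx_delta !mulmxA.
change (\tr (X *m S j *m X^T *m delta_mx j j) = (row j X *m S j *m (row j X)^T) 0 0); rewrite tr_delta.
rewrite !mxE; apply: eq_bigr => k _; rewrite !mxE; congr (_ * _).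
by apply: eq_bigr => l _; rewrite !mxE.
Qed.

End H.

End Helpers.
Import Helpers.


Lemma posS (R : realFieldType) B (S : 'M[R]_B) (r : 'rV[R]_B) :
  sym_pos_def S -> 0 <= (r *m S *m r^T) 0 0 /\ (r != 0 -> 0 < (r *m S *m r^T) 0 0).
Proof.
move=> [_ HS]; have H : r != 0 -> 0 < (r *m S *m r^T) 0 0.
  by move=> rn0; have := HS r^T; rewrite trmxK trmx_eq0; apply.
split=> //; case: (eqVneq r 0) => [->|/H]; last exact: ltW.
by rewrite !mul0mx mxE.
Qed.

Lemma pdD (R : realFieldType) M B (S : 'I_M -> 'M[R]_B) (x : 'cV[R]_(M * B)) :
  (forall i, sym_pos_def (S i)) -> x != 0 -> 0 < (x^T *m blockdiag S *m x) 0 0.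
Proof.
move=> HS xn0; rewrite -(cv_vec x) qfD.
set X := vec_mx x^T.
have : X != 0.
  apply: contra xn0 => /eqP X0; rewrite -(cv_vec x) -/X X0 /cv linear0 /= trmx0 //.
move=> Xn0.
case/boolP: [exists j, row j X != 0] => [/existsP [j Hj] | /existsPn H]; last first.
  exfalso; move/negP: Xn0; apply; apply/eqP/matrixP => i k.
  by have := H i; rewrite negbK => /eqP /matrixP /(_ 0 k); rewrite !mxE.
rewrite (bigD1 j) //=.
have h1 := (@posS _ _ _ (row j X) (HS j)).2 Hj.
have h2 : 0 <= \sum_(i < M | i != j) (row i X *m S i *m (row i X)^T) 0 0.
  by apply: sumr_ge0 => i _; exact: (@posS _ _ _ (row i X) (HS i)).1.
lra.
Qed.

Lemma psdP (R : realFieldType) N M B (A : 'M[R]_(N, M)) (x : 'cV[R]_(M * B)) :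
  0 <= (x^T *m kron (A^T *m A) (1%:M : 'M[R]_B) *m x) 0 0.
Proof.
rewrite -(cv_vec x); set X := vec_mx x^T.
rewrite -mulmxA kron_cv trmx1 mulmx1 dot_cv.
have -> : \tr (X *m (A^T *m A *m X)^T) = \tr ((A *m X) *m (A *m X)^T).
  rewrite !trmx_mul trmxK !mulmxA mxtrace_mulC !mulmxA //.
rewrite tr_sq; apply: sumr_ge0 => i _; apply: sumr_ge0 => j _; exact: sqr_ge0.
Qed.

Theorem mainTheorem6 (R : realFieldType) (N M B : nat)
  (Y : 'M[R]_(N, B)) (Rm : 'M[R]_(M, B)) (A : 'M[R]_(N, M))
  (U : 'M[R]_(N, M)) (Lam V : 'M[R]_M) (S : 'I_M -> 'M[R]_B) :
  A^T *m A \in unitmx ->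
  (* compact SVD A = U Lam V^T *)
  U^T *m U = 1%:M ->
  V^T *m V = 1%:M ->
  is_diag_mx Lam ->
  (forall i : 'I_M, 0 <= Lam i i) ->
  A = U *m Lam *m V^T ->
  (forall i : 'I_M, sym_pos_def (S i)) ->
  let Q : 'M[R]_(M * B) := blockdiag S + kron (A^T *m A) (1%:M : 'M[R]_B) in
  let z : 'cV[R]_(M * B) := vec ((Y - A *m Rm)^T *m A) in
  z != 0 ->
  0 < (z^T *m invmx Q *m z) 0 0 /\
  (z^T *m invmx Q *m z) 0 0 < frob2 (U^T *m (Y - A *m Rm)).
Proof.
move=> KU UU _ _ _ HA HS Q z zn0.
set W := Y - A *m Rm.
set K := A^T *m A.
set D := blockdiag S.
set P := kron K (1%:M : 'M[R]_B).
have zE : z = cv (A^T *m W) by rewrite /z /vec /cv trmx_mul trmxK.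
have hQ : forall x : 'cV[R]_(M * B), x != 0 -> 0 < (x^T *m Q *m x) 0 0.
  move=> x xn0; rewrite /Q mulmxDr mulmxDl addE.
  have := @pdD _ _ _ S x HS xn0; have := @psdP _ _ _ B A x; rewrite -/K -/P -/D; lra.
have QU : Q \in unitmx.
  rewrite unitmxE unitfE; apply/negP => /det0P [v vn0 vQ].
  have := hQ v^T; rewrite trmx_eq0 trmxK vQ mul0mx mxE => /(_ vn0).
  by rewrite ltxx.
set w := invmx Q *m z.
have Qw : Q *m w = z by rewrite /w mulKVmx.
have hw : invmx Q *m z = w by [].
clearbody w.
have wn0 : w != 0.
  by apply: contra zn0 => /eqP w0; rewrite -Qw w0 mulmx0.
have qE : (z^T *m invmx Q *m z) 0 0 = (w^T *m Q *m w) 0 0.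
  rewrite -mulmxA hw -{1}Qw trmx_mul.
  have e : (w^T *m Q *m w)^T = w^T *m Q^T *m w by rewrite !trmx_mul trmxK mulmxA.
  by rewrite -e mxE.
have qsplit : (w^T *m Q *m w) 0 0 = (w^T *m D *m w) 0 0 + (w^T *m P *m w) 0 0.
  by rewrite /Q mulmxDr mulmxDl addE.
have hD := @pdD _ _ _ S w HS wn0; have hP := @psdP _ _ _ B A w.
rewrite -/K -/P -/D in hD hP.
set y := cv (invmx K *m (A^T *m W)).
have Py : P *m y = z by rewrite /P /y kron_cv trmx1 mulmx1 mulmxA mulmxV // mul1mx zE.
have yE : y = cv (invmx K *m (A^T *m W)) by [].
clearbody y.
have PT : P^T = P by rewrite /P kron_tr trmx1 /K trmx_mul trmxK.
have wz : (w^T *m z) 0 0 = (w^T *m Q *m w) 0 0 by rewrite -Qw mulmxA.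
have e2 : (y^T *m P *m w) 0 0 = (w^T *m z) 0 0.
  have e : (w^T *m P *m y)^T = y^T *m P *m w by rewrite !trmx_mul trmxK PT mulmxA.
  by rewrite -e mxE -mulmxA Py.
have hexp := @psdP _ _ _ B A (w - y); rewrite -/K -/P in hexp.
have tB : (w - y)^T = w^T - y^T by rewrite linearB.
rewrite tB mulmxBr !mulmxBl !subE in hexp.
rewrite -(mulmxA w^T P y) -(mulmxA y^T P y) Py e2 in hexp.
have yz : (y^T *m z) 0 0 = frob2 (U^T *m W).
  set G := Lam *m V^T.
  have AG : A = U *m G by rewrite HA mulmxA.
  clearbody G.
  have KG : K = G^T *m G by rewrite /K AG trmx_mul mulmxA -(mulmxA G^T) UU mulmx1.
  have GU : G \in unitmx.
    by have := KU; rewrite -/K KG unitmx_mul unitmx_tr; case/andP.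
  have invK : invmx K = invmx G *m invmx G^T.
    have KB : K *m (invmx G *m invmx G^T) = 1%:M.
      by rewrite KG -mulmxA (mulmxA G) mulmxV // mul1mx mulmxV // unitmx_tr.
    by rewrite -[invmx K]mulmx1 -KB mulmxA mulVmx // mul1mx.
  have AKA : A *m invmx K *m A^T = U *m U^T.
    rewrite invK [in LHS]AG trmx_mul !mulmxA -(mulmxA U G) mulmxV // mulmx1.
    by rewrite -(mulmxA U) mulVmx ?unitmx_tr // mulmx1.
  have R1 : \tr (U^T *m W *m (U^T *m W)^T) = \tr (U *m U^T *m W *m W^T).
    by rewrite trmx_mul trmxK !mulmxA mxtrace_mulC !mulmxA.
  rewrite yE zE dot_cv /frob2 -tr_sq R1 -AKA.
  by rewrite trmx_mul trmxK !mulmxA mxtrace_mulC !mulmxA.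
rewrite qE; rewrite -yz; lra.
Qed.
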